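(* Let $V$ be a finite set, let $t,q$ be positive integers, and let $N=(t!)^2\cdot q^{t+1}$. Let $\mathbf{x}_1,\dots,\mathbf{x}_N\in V^t$ be vectors each of which has pairwise distinct entries. Then there exist indices $i_1<\dots<i_q$ such that, writing $\mathbf{y}_k=\mathbf{x}_{i_k}$ for $k=1,\dots,q$: (1) for each $j=1,\dots,t$, the entries $(\mathbf{y}_1)_j,\dots,(\mathbf{y}_q)_j$ are either all equal or pairwise distinct; and (2) the sets $Y_1,\dots,Y_t$ are pairwise disjoint, where $Y_j=\{(\mathbf{y}_1)_j,\dots,(\mathbf{y}_q)_j\}$.
   Context: For a vector $\mathbf{x}\in V^t$, $(\mathbf{x})_j$ denotes its $j$-th entry. *)

(* Defs.v *)
From mathcomp Require Import all_boot.
Set Implicit Arguments.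
Unset Strict Implicit.
Unset Printing Implicit Defensive.

(* Main.v *)
Require Import Defs.
From mathcomp Require Import all_boot zify ring.

Lemma fS q s : (s.+1)`! ^2 * q ^ s.+2 = q * s.+1 * s.+1 * (s`! ^2 * q ^ s.+1).
Proof. rewrite factS !expnS. ring. Qed.

Lemma nn s c q f : c < q -> 0 < f -> c*(s.+1)*(s.+1)*(f.-1) < q * s.+1 * s.+1 * f.
Proof. move=> h1 h2. rewrite -!mulnA. have : 0 < s.+1 * (s.+1 * f) by rewrite !muln_gt0 h2.
  have : s.+1 * (s.+1 * f.-1) <= s.+1 * (s.+1 * f) by rewrite !leq_mul // leq_pred.
  move: (s.+1 * (s.+1 * f.-1)) (s.+1 * (s.+1 * f)) => u v. nia. Qed.

Lemma card_bigcup_le (I T : finType) (P : pred I) (A : I -> {set T}) :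
  #|\bigcup_(i | P i) A i| <= \sum_(i | P i) #|A i|.
Proof.
elim/big_rec2: _ => [|i n S _ h]; first by rewrite cards0.
apply: leq_trans (leq_card_setU _ _) _. by rewrite leq_add2l.
Qed.

Definition good N t (V : finType) (x : 'I_N -> 'I_t -> V) (K : {set 'I_N}) :=
 (forall j, (forall a b, a \in K -> b \in K -> x a j = x b j) \/
            {in K &, injective (fun a => x a j)}) /\
 (forall j j', j != j' -> forall a b, a \in K -> b \in K -> x a j != x b j').

Definition Dp N t (V : finType) (x : 'I_N -> 'I_t -> V) (J : {set 'I_t}) (F C : {set 'I_N}) :=
  (C \subset F) && [forall a in C, forall b in C, forall j in ~: J, forall j' in ~: J,
     (a != b) ==> (x a j != x b j')].

Arguments good {N t V}.
Arguments Dp {N t V}.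

Lemma caseA N t (V : finType) (x : 'I_N -> 'I_t -> V) (hx : forall n, injective (x n))
  (q : nat) (J : {set 'I_t}) (F C : {set 'I_N}) : (forall j a b, j \in J -> a \in F -> b \in F -> x a j = x b j) ->
  Dp x J F C -> q <= #|C| -> exists K : {set 'I_N}, K \subset F /\ #|K| = q /\ good x K.
Proof.
move=> hJ /andP[sCF /forallP hD] hq.
have hD' : forall a b j j', a \in C -> b \in C -> j \notin J -> j' \notin J -> a != b ->
   x a j != x b j'.
  move=> a b j j' ha hb hj hj' hab.
  move: (hD a); rewrite ha /= => /forallP/(_ b); rewrite hb /= => /forallP/(_ j).
  rewrite in_setC hj /= => /forallP/(_ j'); rewrite in_setC hj' /=.
  by move/implyP/(_ hab).
set K := [set a in take q (enum C)].
have sKC : K \subset C.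
  by apply/subsetP => a; rewrite inE => /mem_take; rewrite mem_enum.
exists K; split; first exact: subset_trans sKC sCF.
split.
  have u : uniq (take q (enum C)) by apply: take_uniq; exact: enum_uniq.
  rewrite cardsE (card_uniqP u).
  by rewrite size_take -cardE; case: ltnP hq => // h1 h2; apply/eqP; rewrite eqn_leq h1 h2.
split.
  move=> j; case hj: (j \in J).
    left => a b ha hb; apply: hJ => //; apply: (subsetP (subset_trans sKC sCF)) => //.
  right => a b ha hb /= e; apply/eqP; apply/negPn/negP => hab.
  have := hD' a b j j (subsetP sKC _ ha) (subsetP sKC _ hb).
  by rewrite hj e eqxx => /(_ isT isT hab).
move=> j j' hjj' a b ha hb.
case: (eqVneq a b) => [<-|hab]; first by apply/eqP => /hx /eqP; apply/negP.
have haF := subsetP (subset_trans sKC sCF) _ ha.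
have hbF := subsetP (subset_trans sKC sCF) _ hb.
have haC := subsetP sKC _ ha. have hbC := subsetP sKC _ hb.
case hj: (j \in J); case hj': (j' \in J).
- rewrite (hJ j a b hj haF hbF); apply/eqP => /hx /eqP; by apply/negP.
- rewrite (hJ j a b hj haF hbF); apply/eqP => /hx /eqP; by apply/negP.
- rewrite -(hJ j' a b hj' haF hbF); apply/eqP => /hx /eqP; by apply/negP.
- by apply: hD' => //; rewrite ?hj ?hj'.
Qed.
Lemma mainL N t (V : finType) (x : 'I_N -> 'I_t -> V) (hx : forall n, injective (x n))
  (q : nat) (hq : 0 < q) s : forall (J : {set 'I_t}) (F : {set 'I_N}), #|~: J| = s ->
  (forall j a b, j \in J -> a \in F -> b \in F -> x a j = x b j) ->
  s`! ^ 2 * q ^ s.+1 <= #|F| ->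
  exists K : {set 'I_N}, K \subset F /\ #|K| = q /\ good x K.
Proof.
elim: s => [|s IH] J F hs hJ hF.
- have [C] : exists C, Dp x J F C /\ forall C', Dp x J F C' -> #|C'| <= #|C|.
    have h0 : Dp x J F set0.
      by rewrite /Dp sub0set; apply/forallP => a; rewrite inE.
    case: (arg_maxnP (fun C : {set 'I_N} => #|C|) h0) => C hC hmax.
    by exists C.
  case=> hDC hmax.
  case: (leqP q #|C|) => hqC; first exact: (@caseA _ _ _ x hx q J F C hJ hDC hqC).
  exfalso.
  have hFr : forall j, j \notin ~: J.
    move=> j; apply/negP => hj. move: hs; rewrite (cardD1 j) hj. by [].
  have sFC : F \subset C.
    apply/subsetP => n hn; apply/negPn/negP => hnC.
    have hD : Dp x J F (n |: C).
      case/andP: hDC => sCF _.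
      rewrite /Dp subUset sub1set hn sCF /=.
      apply/forall_inP => a _; apply/forall_inP => b _.
      apply/forall_inP => j hj. by move: (hFr j); rewrite hj.
    have := hmax _ hD. by rewrite cardsU1 hnC add1n ltnn.
  have := subset_leq_card sFC. rewrite fact0 /= expn1 in hF. 
  move=> h; have := leq_trans hF h. by rewrite mul1n leqNgt hqC.
- have [C] : exists C, Dp x J F C /\ forall C', Dp x J F C' -> #|C'| <= #|C|.
    have h0 : Dp x J F set0.
      by rewrite /Dp sub0set; apply/forallP => a; rewrite inE.
    case: (arg_maxnP (fun C : {set 'I_N} => #|C|) h0) => C hC hmax.
    by exists C.
  case=> hDC hmax.
  case: (leqP q #|C|) => hqC; first exact: (@caseA _ _ _ x hx q J F C hJ hDC hqC).
  have sCF : C \subset F by case/andP: hDC.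
  have hDC' : forall a b j j', a \in C -> b \in C -> j \in ~: J -> j' \in ~: J -> a != b ->
     x a j != x b j'.
    move=> a b j j' ha hb hj hj' hab; case/andP: hDC => _ /forall_inP/(_ a ha)
      /forall_inP/(_ b hb)/forall_inP/(_ j hj)/forall_inP/(_ j' hj').
    by move/implyP/(_ hab).
  set P := setX (setX C (~: J)) (~: J).
  set A := fun p : 'I_N * 'I_t * 'I_t => [set n in F | x n p.1.2 == x p.1.1 p.2].
  have cover : F \subset \bigcup_(p in P) A p.
    apply/subsetP => n hn.
    case hnC: (n \in C).
      have : 0 < #|~: J| by rewrite hs.
      rewrite card_gt0 => /set0Pn [j hj].
      apply/bigcupP; exists ((n, j), j); first by move: hj; rewrite !inE /= hnC => ->.
      by rewrite inE hn eqxx.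
    have nD : ~~ Dp x J F (n |: C).
      apply/negP => hD; have := hmax _ hD.
      by rewrite cardsU1 hnC add1n ltnn.
    rewrite /Dp subUset sub1set hn sCF /= in nD.
    case/forall_inPn: nD => a ha /forall_inPn [b hb] /forall_inPn [j hj] /forall_inPn [j' hj'].
    rewrite negb_imply negbK => /andP [hab /eqP e].
    move: ha hb; rewrite !in_setU1.
    case: (eqVneq a n) => [ean|ean] /=.
      move=> _ hb. have hbn : b != n by rewrite -ean eq_sym.
      rewrite (negbTE hbn) /= in hb.
      apply/bigcupP; exists ((b, j), j'); first by move: hj hj'; rewrite !inE /= hb => -> ->.
      by rewrite inE hn -ean e eqxx.
    move=> ha; case: (eqVneq b n) => [ebn|ebn] /= hb.
      apply/bigcupP; exists ((a, j'), j); first by move: hj hj'; rewrite !inE /= ha => -> ->.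
      by rewrite inE hn -ebn -e eqxx.
    by move: (hDC' a b j j' ha hb hj hj' hab); rewrite e eqxx.
  have hsum : #|F| <= \sum_(p in P) #|A p| :=
    leq_trans (subset_leq_card cover) (card_bigcup_le _ _ _ _).
  set f := s`! ^ 2 * q ^ s.+1.
  have fpos : 0 < f by rewrite /f muln_gt0 !expn_gt0 fact_gt0 hq.
  case: (boolP [exists p in P, f <= #|A p|]).
    case/exists_inP => [[[a j] j']] hp hA.
    rewrite !inE /= in hp. case/andP: hp => /andP [ha hj] hj'.
    have hs' : #|~: (j |: J)| = s.
      have h1 := cardsC J; have h2 := cardsC (j |: J).
      rewrite cardsU1 in h2. rewrite hj in h2. lia.
    have hJ' : forall j0 a0 b0, j0 \in j |: J -> a0 \in A (a, j, j') -> b0 \in A (a, j, j') ->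
        x a0 j0 = x b0 j0.
      move=> j0 a0 b0; rewrite in_setU1 !inE /= => hj0 /andP [ha0 /eqP e0] /andP [hb0 /eqP e1].
      case/orP: hj0 => [/eqP ->|hj0]; first by rewrite e0 e1.
      exact: hJ.
    have [K [sK [cK gK]]] := IH _ _ hs' hJ' hA.
    exists K; split => //; apply: subset_trans sK _.
    by apply/subsetP => n; rewrite inE => /andP [].
  move/exists_inPn => hsmall.
  have : \sum_(p in P) #|A p| <= \sum_(p in P) f.-1.
    apply: leq_sum => p hp. have := hsmall p hp. rewrite -ltnNge => h; rewrite -ltnS prednK //.
  rewrite sum_nat_const /P !cardsX hs => h2.
  have := @nn s _ _ _ hqC fpos. rewrite /f -fS => h3.
  have := leq_trans hF (leq_trans hsum h2).
  rewrite -/f. by rewrite leqNgt h3.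
Qed.

Theorem lemma3p3 (V : finType) (t q : nat) (ht : 0 < t) (hq : 0 < q)
  (x : 'I_((t`!) ^ 2 * q ^ t.+1) -> 'I_t -> V)
  (hx : forall n, injective (x n)) :
  exists i : 'I_q -> 'I_((t`!) ^ 2 * q ^ t.+1),
    (forall k k' : 'I_q, k < k' -> i k < i k') /\
    (forall j : 'I_t,
       (forall k k' : 'I_q, x (i k) j = x (i k') j) \/
       injective (fun k : 'I_q => x (i k) j)) /\
    (forall j j' : 'I_t, j != j' ->
       [disjoint [set x (i k) j | k : 'I_q] & [set x (i k) j' | k : 'I_q]]).
Proof.
set N := (t`!) ^ 2 * q ^ t.+1.
have hN : 0 < N by rewrite /N muln_gt0 !expn_gt0 fact_gt0 hq.
have hs : #|~: (set0 : {set 'I_t})| = t by rewrite setC0 cardsT card_ord.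
have hJ : forall j (a b : 'I_N), j \in (set0 : {set 'I_t}) -> a \in [set: 'I_N] ->
   b \in [set: 'I_N] -> x a j = x b j by move=> j a b; rewrite inE.
have hF : t`! ^ 2 * q ^ t.+1 <= #|[set: 'I_N]| by rewrite cardsT card_ord.
have [K [_ [cK [g1 g2]]]] := @mainL _ _ _ x hx q hq t _ _ hs hJ hF.
set e := enum K.
have se : size e = q by rewrite /e -cardE cK.
have d : 'I_N := Ordinal hN.
pose i := fun k : 'I_q => nth d e k.
have iK : forall k, i k \in K by move=> k; rewrite -mem_enum mem_nth // se.
have sorted_e : sorted (fun a b : 'I_N => a < b) e.
  have tr : transitive (fun a b : 'I_N => a < b) by move=> ? ? ? ; exact: ltn_trans.
  rewrite /e /enum_mem -enumT; apply: sorted_filter => //.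
  have := iota_ltn_sorted 0 N; rewrite -val_enum_ord sorted_map. by [].
have imono : forall k k' : 'I_q, k < k' -> i k < i k'.
  move=> k k' hk.
  have tr : transitive (fun a b : 'I_N => a < b) by move=> ? ? ? ; exact: ltn_trans.
  apply: (sorted_ltn_nth tr d sorted_e) => //; rewrite inE se //.
have iinj : injective i.
  move=> k k' e0; apply/val_inj; case: (ltngtP k k') => // h.
  - by have := imono _ _ h; rewrite e0 ltnn.
  - by have := imono _ _ h; rewrite e0 ltnn.
exists i; split => //; split.
  move=> j; case: (g1 j) => [hc|hi]; [left => k k'; exact: hc | right => k k' e0].
  by apply: iinj; apply: hi.
move=> j j' hjj'; rewrite disjoint_subset; apply/subsetP => v /imsetP [k _ ->].
rewrite !inE; apply/negP => /imsetP [k' _ e0].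
by move: (g2 j j' hjj' _ _ (iK k) (iK k')); rewrite e0 eqxx.
Qed.
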